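(* Consider the networked SIR epidemic-opinion model described in the context, under the standing assumption stated there, and let $(s_e,\mathbf 0,o_e)$ with $s_e\in[0,1]^n$ and $o_e=(\bar L+I_n)^{-1}(\mathbf 1_n-s_e)$ be an equilibrium. Then the opinions are in consensus, i.e. $[o_e]_i=[o_e]_j$ for all $i\ne j$, if and only if all communities have the same proportion of infections, i.e. $[s_e]_i=[s_e]_j$ for all $i\neq j$; in this case the equilibrium is $(s_e,\mathbf 0,\mathbf 1_n-s_e)$.
   Context: There are $n$ communities. For $t\ge0$ and $i\in[n]$, $s_i(t),x_i(t),o_i(t)\in[0,1]$ denote the susceptible proportion, infected proportion and opinion of community $i$. The disease transmission network is a directed graph $\mathcal G=(\mathcal V,\mathcal E)$ on $n$ nodes with edge weights $\beta_{ij}>0$ if $(v_j,v_i)\in\mathcal E$ (and $\beta_{ij}=0$ otherwise); $\mathcal N_i=\{v_j:(v_j,v_i)\in\mathcal E\}$. The opinion network is a directed graph $\bar{\mathcal G}$ on the same nodes with nonnegative weights $\bar a_{ij}$ and Laplacian $\bar L=\mathrm{diag}(k_1,\dots,k_n)-\bar A$, where $[\bar A]_{ij}=\bar a_{ij}$ and $k_i=\sum_j \bar a_{ij}$. Parameters: $\beta_{\min}>0$, $\gamma_{\min}>0$, recovery rates $\gamma_i$. The model is $\dot s_i=-s_i\sum_{j\in\mathcal N_i}\big(\beta_{ij}-(\beta_{ij}-\beta_{\min})o_i\big)x_j$, $\dot x_i=s_i\sum_{j\in\mathcal N_i}\big(\beta_{ij}-(\beta_{ij}-\beta_{\min})o_i\big)x_j-\big(\gamma_{\min}+(\gamma_i-\gamma_{\min})o_i\big)x_i$,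 $\dot o=(\mathbf 1_n-s)-(\bar L+I_n)o$. Standing assumption: $\gamma_i\ge\gamma_{\min}>0$, $\beta_{ij}\ge\beta_{\min}>0$ for all $j\in\mathcal N_i$, and both $\mathcal G$ and $\bar{\mathcal G}$ are strongly connected. *)

(* Defs.v *)
From mathcomp Require Import all_boot all_order all_algebra.
Set Implicit Arguments. Unset Strict Implicit. Unset Printing Implicit Defensive.
Import Order.TTheory GRing.Theory Num.Theory.
Local Open Scope ring_scope.

Section Model.
Variables (R : realFieldType) (n : nat).

Definition laplacian (A : 'M[R]_n) : 'M[R]_n :=
  diag_mx (\row_i \sum_j A i j) - A.

Definition strongly_connected (E : rel 'I_n) : Prop :=
  forall i j : 'I_n, connect E i j.

Definition trans_edge (beta : 'M[R]_n) : rel 'I_n := fun j i => 0 < beta i j.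
Definition opin_edge (A : 'M[R]_n) : rel 'I_n := fun j i => 0 < A i j.

Definition pressure (beta : 'M[R]_n) (bmin : R) (o x : 'cV[R]_n) (i : 'I_n) : R :=
  \sum_(j | 0 < beta i j) (beta i j - (beta i j - bmin) * o i ord0) * x j ord0.

Definition s_dot beta bmin (s x o : 'cV[R]_n) : 'cV[R]_n :=
  \col_i (- s i ord0 * pressure beta bmin o x i).

Definition x_dot beta bmin (gmin : R) (gamma : 'I_n -> R) (s x o : 'cV[R]_n) : 'cV[R]_n :=
  \col_i (s i ord0 * pressure beta bmin o x i
          - (gmin + (gamma i - gmin) * o i ord0) * x i ord0).

Definition o_dot (A : 'M[R]_n) (s o : 'cV[R]_n) : 'cV[R]_n :=
  (const_mx 1 - s) - (laplacian A + 1%:M) *m o.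

Definition is_equilibrium beta bmin gmin gamma A (s x o : 'cV[R]_n) : Prop :=
  [/\ s_dot beta bmin s x o = 0,
      x_dot beta bmin gmin gamma s x o = 0 &
      o_dot A s o = 0].

End Model.

(* Main.v *)
Require Import Defs.
From mathcomp Require Import all_boot all_order all_algebra.
From mathcomp Require Import lra.
Import Order.TTheory GRing.Theory Num.Theory.
Local Open Scope ring_scope.

Lemma rowM (R : realFieldType) n (A : 'M[R]_n) (v : 'cV[R]_n) i :
  ((laplacian A + 1%:M) *m v) i ord0 = v i ord0 + \sum_j A i j * (v i ord0 - v j ord0).
Proof.
rewrite mulmxDl mulmxBl mul1mx /laplacian mul_diag_mx !mxE.
rewrite (addrC (_ - _)); congr (_ + _).
rewrite big_distrl /= -sumrB; apply: eq_bigr => j _.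
by rewrite mulrBr.
Qed.

Lemma le0 (R : realFieldType) n (A : 'M[R]_n) (v : 'cV[R]_n) :
  (forall i j, 0 <= A i j) ->
  (laplacian A + 1%:M) *m v = 0 -> forall k, v k ord0 <= 0.
Proof.
move=> hA hv k.
case: (@arg_maxP _ _ 'I_n k xpredT (fun i => v i ord0) isT) => i _ hi.
apply: le_trans (hi k isT) _.
have := congr1 (fun M : 'M[R]_(n,1) => M i ord0) hv; rewrite /= rowM mxE => h.
have : 0 <= \sum_j A i j * (v i ord0 - v j ord0).
  apply: sumr_ge0 => j _; apply: mulr_ge0 => //; rewrite subr_ge0; exact: hi.
move: h; set S := \sum_j _ => h hS.
lra.
Qed.

Lemma inj (R : realFieldType) n (A : 'M[R]_n) (v w : 'cV[R]_n) :
  (forall i j, 0 <= A i j) ->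
  (laplacian A + 1%:M) *m v = (laplacian A + 1%:M) *m w -> v = w.
Proof.
move=> hA h; apply/eqP; rewrite -subr_eq0; apply/eqP/matrixP => k l.
rewrite (ord1 l) [RHS]mxE; apply/eqP; rewrite eq_le.
have h1 : (laplacian A + 1%:M) *m (v - w) = 0 by rewrite mulmxBr h subrr.
have h2 : (laplacian A + 1%:M) *m (w - v) = 0 by rewrite mulmxBr h subrr.
have := @le0 _ _ _ _ hA h1 k; have := @le0 _ _ _ _ hA h2 k; rewrite !mxE => H1 H2.
lra.
Qed.

Lemma cons_fix (R : realFieldType) n (A : 'M[R]_n) (v : 'cV[R]_n) :
  (forall i j, i != j -> v i ord0 = v j ord0) ->
  (laplacian A + 1%:M) *m v = v.
Proof.
move=> hv; apply/matrixP => i l; rewrite (ord1 l) rowM big1 ?addr0 // => j _.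
case: (eqVneq i j) => [->|ne]; first by rewrite subrr mulr0.
by rewrite (hv i j ne) subrr mulr0.
Qed.

Theorem lemma4 (R : realFieldType) (n : nat)
  (beta : 'M[R]_n) (bmin gmin : R) (gamma : 'I_n -> R) (Abar : 'M[R]_n)
  (hbmin : 0 < bmin) (hgmin : 0 < gmin)
  (hgamma : forall i, gmin <= gamma i)
  (hbeta0 : forall i j, 0 <= beta i j)
  (hbeta : forall i j, 0 < beta i j -> bmin <= beta i j)
  (hA0 : forall i j, 0 <= Abar i j)
  (hG : strongly_connected (trans_edge beta))
  (hGbar : strongly_connected (opin_edge Abar))
  (se : 'cV[R]_n)
  (hse : forall i, 0 <= se i ord0 <= 1) :
  let oe := invmx (laplacian Abar + 1%:M) *m (const_mx 1 - se) in
  is_equilibrium beta bmin gmin gamma Abar se 0 oe ->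
  ((forall i j : 'I_n, i != j -> oe i ord0 = oe j ord0) <->
   (forall i j : 'I_n, i != j -> se i ord0 = se j ord0))
  /\ ((forall i j : 'I_n, i != j -> se i ord0 = se j ord0) ->
      oe = const_mx 1 - se).
Proof.
move=> oe [_ _ ho].
have heq : (laplacian Abar + 1%:M) *m oe = const_mx 1 - se.
  by move: ho; rewrite /o_dot => /eqP; rewrite subr_eq0 => /eqP <-.
clearbody oe.
have P2 : (forall i j : 'I_n, i != j -> se i ord0 = se j ord0) ->
      oe = const_mx 1 - se.
  move=> hs; apply: (@inj _ _ _ _ _ hA0); rewrite heq cons_fix // => i j ne.
  by rewrite !mxE (hs i j ne).
split=> //; split.
- move=> ho' i j ne.
  have := @cons_fix _ _ Abar _ ho'; rewrite heq => E.
  have Ei := congr1 (fun M : 'M[R]_(n,1) => M i ord0) E.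
  have Ej := congr1 (fun M : 'M[R]_(n,1) => M j ord0) E.
  move: Ei Ej (ho' i j ne); rewrite /= !mxE => Ei Ej Eo; lra.
- by move=> hs i j ne; rewrite (P2 hs) !mxE (hs i j ne).
Qed.
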